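(* Let $\{A,S_0,\Pi_0\}$ be an admissible triple with $\pm\mathrm{i}\notin\sigma(A)$, and write $\Pi_0=\begin{bmatrix}\vartheta_1&\vartheta_2\end{bmatrix}$. Then for all $k\ge0$ $$\Pi_k=\begin{bmatrix}(I_n+\mathrm{i} A^{-1})^k\vartheta_1 & (I_n-\mathrm{i} A^{-1})^k\vartheta_2\end{bmatrix},$$ and with $R_k:=(I_n+\mathrm{i} A^{-1})^{-k}S_k\big(I_n-\mathrm{i}(A^* )^{-1}\big)^{-k}$ and $Q_k:=(I_n-\mathrm{i} A^{-1})^{-k}S_k\big(I_n+\mathrm{i}(A^* )^{-1}\big)^{-k}$ one has $$R_{k+1}-R_k=2(I_n+\mathrm{i} A^{-1})^{-k-1}A^{-1}(I_n-\mathrm{i} A^{-1})^k\vartheta_2\vartheta_2^*\big((I_n-\mathrm{i} A^{-1})^k\big)^*(A^{-1})^*\big((I_n+\mathrm{i} A^{-1})^{-k-1}\big)^*\ge0,$$ and $Q_{k+1}-Q_k\ge0$. Consequently the limits $\varkappa_R:=\lim_{k\to\infty}R_k^{-1}\ge0$ and $\varkappa_Q:=\lim_{k\to\infty}Q_k^{-1}\ge0$ exist.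
   Context: Fix positive integers $m_1,m_2$, $m=m_1+m_2$, $j=\mathrm{diag}(I_{m_1},-I_{m_2})$, $n\in\mathbb{N}$. An admissible triple (self-adjoint case) consists of an $n\times n$ matrix $A$ with $\det A\ne0$, an $n\times n$ matrix $S_0>0$, and an $n\times m$ matrix $\Pi_0$ with $AS_0-S_0A^*=\mathrm{i}\,\Pi_0j\Pi_0^*$; $\vartheta_1,\vartheta_2$ are the $n\times m_1$ and $n\times m_2$ blocks of $\Pi_0$. The sequences are defined for $k\ge0$ by $\Pi_{k+1}=\Pi_k+\mathrm{i} A^{-1}\Pi_k j$ and $S_{k+1}=S_k+A^{-1}S_k(A^* )^{-1}+A^{-1}\Pi_k\Pi_k^*(A^* )^{-1}$ (so $S_k>0$ and $AS_k-S_kA^*=\mathrm{i}\Pi_kj\Pi_k^*$ for all $k$). $\sigma(A)$ is the spectrum of $A$. *)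

(* Defs.v *)
From HB Require Import structures.
From mathcomp Require Import all_boot all_order all_algebra.
Set Implicit Arguments. Unset Strict Implicit. Unset Printing Implicit Defensive.
Import Order.TTheory GRing.Theory Num.Theory.
Local Open Scope ring_scope.

Section Defs.
Variable C : numClosedFieldType.

Definition ctrmx (p q : nat) (M : 'M[C]_(p, q)) : 'M[C]_(q, p) := (map_mx Num.conj M)^T.

Definition psdmx (n : nat) (M : 'M[C]_n) : Prop :=
  ctrmx M = M /\ forall v : 'cV[C]_n, 0 <= (ctrmx v *m M *m v) 0 0.

Definition pdmx (n : nat) (M : 'M[C]_n) : Prop :=
  ctrmx M = M /\ forall v : 'cV[C]_n, v != 0 -> 0 < (ctrmx v *m M *m v) 0 0.

Definition jmx (m1 m2 : nat) : 'M[C]_(m1 + m2) := block_mx 1%:M 0 0 (- 1%:M).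

Definition admissible (n m1 m2 : nat) (A S0 : 'M[C]_n) (Pi0 : 'M[C]_(n, m1 + m2)) : Prop :=
  \det A != 0 /\ pdmx S0 /\
  A *m S0 - S0 *m ctrmx A = 'i *: (Pi0 *m jmx m1 m2 *m ctrmx Pi0).

Fixpoint Piseq (n m1 m2 : nat) (A : 'M[C]_n) (Pi0 : 'M[C]_(n, m1 + m2)) (k : nat)
  : 'M[C]_(n, m1 + m2) :=
  if k is k'.+1 then
    Piseq A Pi0 k' + 'i *: (invmx A *m Piseq A Pi0 k' *m jmx m1 m2)
  else Pi0.

Fixpoint Sseq (n m1 m2 : nat) (A S0 : 'M[C]_n) (Pi0 : 'M[C]_(n, m1 + m2)) (k : nat)
  : 'M[C]_n :=
  if k is k'.+1 then
    Sseq A S0 Pi0 k' + invmx A *m Sseq A S0 Pi0 k' *m invmx (ctrmx A)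
    + invmx A *m Piseq A Pi0 k' *m ctrmx (Piseq A Pi0 k') *m invmx (ctrmx A)
  else S0.

Definition mx_cvg (p q : nat) (u : nat -> 'M[C]_(p, q)) (L : 'M[C]_(p, q)) : Prop :=
  forall eps : C, 0 < eps -> exists N : nat, forall k : nat, (N <= k)%N ->
    forall i j, `|u k i j - L i j| < eps.

(* least-upper-bound property of the real numbers of C; together with
   algebraic closedness this pins C down to the complex numbers *)
Definition real_complete : Prop :=
  forall E : C -> Prop, (forall x, E x -> x \is Num.real) -> (exists x, E x) ->
  (exists M, M \is Num.real /\ forall x, E x -> x <= M) ->
  exists s, s \is Num.real /\ (forall x, E x -> x <= s) /\
    (forall M, M \is Num.real -> (forall x, E x -> x <= M) -> s <= M).

End Defs.

(* Main.v *)
Require Import Defs.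
From HB Require Import structures.
From mathcomp Require Import all_boot all_order all_algebra.
From mathcomp Require Import ring.
From Stdlib Require Import Classical ClassicalEpsilon.
Import Order.TTheory GRing.Theory Num.Theory.
Local Open Scope ring_scope.
Set Implicit Arguments. Unset Strict Implicit. Unset Printing Implicit Defensive.


Section Ctr.
Variable C : numClosedFieldType.

Lemma ctrmxE p q (M : 'M[C]_(p, q)) i j : ctrmx M i j = (M j i)^*.
Proof. by rewrite /ctrmx !mxE. Qed.

Lemma ctrmxK p q (M : 'M[C]_(p, q)) : ctrmx (ctrmx M) = M.
Proof. by apply/matrixP=> i j; rewrite !ctrmxE conjCK. Qed.

Lemma ctrmx_mul p q r (M : 'M[C]_(p, q)) (N : 'M[C]_(q, r)) :
  ctrmx (M *m N) = ctrmx N *m ctrmx M.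
Proof. by rewrite /ctrmx map_mxM trmx_mul. Qed.

Lemma ctrmxD p q (M N : 'M[C]_(p, q)) : ctrmx (M + N) = ctrmx M + ctrmx N.
Proof. by apply/matrixP=> i j; rewrite !ctrmxE !mxE rmorphD. Qed.

Lemma ctrmxN p q (M : 'M[C]_(p, q)) : ctrmx (- M) = - ctrmx M.
Proof. by apply/matrixP=> i j; rewrite !ctrmxE !mxE rmorphN. Qed.

Lemma ctrmxB p q (M N : 'M[C]_(p, q)) : ctrmx (M - N) = ctrmx M - ctrmx N.
Proof. by rewrite ctrmxD ctrmxN. Qed.

Lemma ctrmxZ p q a (M : 'M[C]_(p, q)) : ctrmx (a *: M) = a^* *: ctrmx M.
Proof. by apply/matrixP=> i j; rewrite !ctrmxE !mxE rmorphM. Qed.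

Lemma ctrmx1 p : ctrmx (1%:M : 'M[C]_p) = 1%:M.
Proof. by apply/matrixP=> i j; rewrite ctrmxE !mxE eq_sym rmorphMn /= conjC1. Qed.

Lemma ctrmx0 p q : ctrmx (0 : 'M[C]_(p, q)) = 0.
Proof. by apply/matrixP=> i j; rewrite ctrmxE !mxE conjC0. Qed.

Lemma ctrmx_row p q1 q2 (X : 'M[C]_(p, q1)) (Y : 'M[C]_(p, q2)) :
  ctrmx (row_mx X Y) = col_mx (ctrmx X) (ctrmx Y).
Proof. by rewrite /ctrmx map_row_mx tr_row_mx. Qed.

Lemma det_ctrmx p (M : 'M[C]_p) : \det (ctrmx M) = (\det M)^*.
Proof. by rewrite /ctrmx det_tr det_map_mx. Qed.

Lemma ctrmx_unit p (M : 'M[C]_p) : (ctrmx M \in unitmx) = (M \in unitmx).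
Proof. by rewrite !unitmxE !unitfE det_ctrmx conjC_eq0. Qed.

Lemma ctrmx_inv p (M : 'M[C]_p) : ctrmx (invmx M) = invmx (ctrmx M).
Proof.
case uM: (M \in unitmx); last first.
  rewrite invmx_out ?inE ?uM // invmx_out // inE /= ctrmx_unit uM //.
have uM' : ctrmx M \in unitmx by rewrite ctrmx_unit.
have h : ctrmx (invmx M) *m ctrmx M = 1%:M by rewrite -ctrmx_mul mulmxV // ctrmx1.
by rewrite -[LHS]mulmx1 -(mulmxV uM') mulmxA h mul1mx.
Qed.

Lemma ctrmxX p (M : 'M[C]_p) k : ctrmx (M ^+ k) = (ctrmx M) ^+ k.
Proof.
elim: k => [|k IH]; first by rewrite !expr0 ctrmx1.
by rewrite exprS -mulmxE ctrmx_mul IH exprSr mulmxE.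
Qed.
End Ctr.


Section Ev.
Variable C : numClosedFieldType.
Definition ev p q (r : 'I_p) (c : 'I_q) (M : 'M[C]_(p, q)) := M r c.
Lemma ev_eq p q (M N : 'M[C]_(p, q)) : (forall r c, ev r c M = ev r c N) -> M = N.
Proof. by move=> h; apply/matrixP=> r c; apply: h. Qed.
Lemma evD p q r c (M N : 'M[C]_(p, q)) : ev r c (M + N) = ev r c M + ev r c N.
Proof. by rewrite /ev mxE. Qed.
Lemma evN p q r c (M : 'M[C]_(p, q)) : ev r c (- M) = - ev r c M.
Proof. by rewrite /ev mxE. Qed.
Lemma evB p q r c (M N : 'M[C]_(p, q)) : ev r c (M - N) = ev r c M - ev r c N.
Proof. by rewrite evD evN. Qed.
Lemma evZ p q r c a (M : 'M[C]_(p, q)) : ev r c (a *: M) = a * ev r c M.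
Proof. by rewrite /ev mxE. Qed.
Lemma ev0 p q r c : ev r c (0 : 'M[C]_(p, q)) = 0.
Proof. by rewrite /ev mxE. Qed.
End Ev.

Ltac mxnorm := repeat progress rewrite ?mulmxDl ?mulmxDr ?mulmxBl ?mulmxBr ?mulNmx ?mulmxN ?mul1mx ?mulmx1 ?mul0mx ?mulmx0 ?scalerDr ?scalerBr ?scalerN ?scalerA -?scalemxAl -?scalemxAr ?mulmxA.
Ltac evring := apply: ev_eq => ? ?; repeat progress rewrite ?evD ?evB ?evN ?evZ ?ev0; repeat progress rewrite ?mulrDr ?mulrBr ?mulrN ?mulrA ?mulCii; ring.

Section Main.
Variables (C : numClosedFieldType) (n m1 m2 : nat) (A S0 : 'M[C]_n) (Pi0 : 'M[C]_(n, m1 + m2)).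
Hypothesis uA : A \in unitmx.
Let B := invmx A.
Let Bs := invmx (ctrmx A).
Let Ap := 1%:M + 'i *: B.
Let Am := 1%:M - 'i *: B.
Let Aps := 1%:M - 'i *: Bs.
Let Ams := 1%:M + 'i *: Bs.
Let th1 := lsubmx Pi0.
Let th2 := rsubmx Pi0.
Let X k := Ap ^+ k *m th1.
Let Y k := Am ^+ k *m th2.
Let S k := Sseq A S0 Pi0 k.

Lemma uAs : ctrmx A \in unitmx. Proof. by rewrite ctrmx_unit. Qed.
Lemma AB : A *m B = 1%:M. Proof. exact: mulmxV. Qed.
Lemma BA : B *m A = 1%:M. Proof. exact: mulVmx. Qed.
Lemma AsBs : ctrmx A *m Bs = 1%:M. Proof. exact: (mulmxV uAs). Qed.
Lemma BsAs : Bs *m ctrmx A = 1%:M. Proof. exact: (mulVmx uAs). Qed.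

Lemma ctrAp : ctrmx Ap = Aps.
Proof. by rewrite /Ap /Aps ctrmxD ctrmx1 ctrmxZ conjCi ctrmx_inv scaleNr. Qed.
Lemma ctrAm : ctrmx Am = Ams.
Proof. by rewrite /Am /Ams ctrmxB ctrmx1 ctrmxZ conjCi ctrmx_inv scaleNr opprK. Qed.

Lemma Pi_form k : Piseq A Pi0 k = row_mx (X k) (Y k).
Proof.
elim: k => [|k IH] /=.
  by rewrite /X /Y !expr0 !mul1mx hsubmxK.
rewrite IH -mulmxA /jmx mul_row_block !mulmx0 !mulmx1 addr0 add0r mulmxN mul_mx_row.
rewrite scale_row_mx add_row_mx /X /Y !exprS -!mulmxE /Ap /Am.
by congr row_mx; mxnorm.
Qed.

Lemma PiPi (X1 : 'M[C]_(n, m1)) (Y1 : 'M[C]_(n, m2)) :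
  row_mx X1 Y1 *m ctrmx (row_mx X1 Y1) = X1 *m ctrmx X1 + Y1 *m ctrmx Y1.
Proof. by rewrite ctrmx_row mul_row_col. Qed.

Lemma PiJPi (X1 : 'M[C]_(n, m1)) (Y1 : 'M[C]_(n, m2)) :
  row_mx X1 Y1 *m jmx C m1 m2 *m ctrmx (row_mx X1 Y1) = X1 *m ctrmx X1 - Y1 *m ctrmx Y1.
Proof.
rewrite /jmx mul_row_block !mulmx0 !mulmx1 addr0 add0r ctrmx_row mul_row_col.
by rewrite mulmxN mulNmx mulmx1.
Qed.

Lemma Xs k : X k.+1 = Ap *m X k.
Proof. by rewrite /X exprS -mulmxE mulmxA. Qed.
Lemma Ys k : Y k.+1 = Am *m Y k.
Proof. by rewrite /Y exprS -mulmxE mulmxA. Qed.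

Lemma Sstep k : S k.+1 = S k + B *m S k *m Bs
   + B *m (X k *m ctrmx (X k) + Y k *m ctrmx (Y k)) *m Bs.
Proof.
rewrite /S /= Pi_form -(mulmxA (invmx A) (row_mx _ _)) PiPi.
by [].
Qed.

Lemma Inv (hadm : admissible A S0 Pi0) k :
  A *m S k - S k *m ctrmx A = 'i *: (X k *m ctrmx (X k) - Y k *m ctrmx (Y k)).
Proof.
elim: k => [|k IH].
  case: hadm => _ [_ h]; rewrite /S /= h -[in LHS](hsubmxK Pi0) PiJPi.
  by rewrite /X /Y !expr0 !mul1mx.
rewrite Sstep Xs Ys (ctrmx_mul Ap) (ctrmx_mul Am) ctrAp ctrAm.
have eP : Ap *m X k *m (ctrmx (X k) *m Aps) = Ap *m (X k *m ctrmx (X k)) *m Aps by rewrite !mulmxA.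
have eN : Am *m Y k *m (ctrmx (Y k) *m Ams) = Am *m (Y k *m ctrmx (Y k)) *m Ams by rewrite !mulmxA.
rewrite eP eN {eP eN}.
move: IH; rewrite /S.
set SS := Sseq A S0 Pi0 k; set P := X k *m ctrmx (X k); set N := Y k *m ctrmx (Y k).
move=> IH; rewrite /Ap /Am /Aps /Ams.
have hAB := AB; have hBA := BA; have hAsBs := AsBs; have hBsAs := BsAs.
clearbody SS P N Ap Am Aps Ams X Y B Bs.
have e3 : SS *m Bs = B *m SS + B *m ('i *: (P - N)) *m Bs.
  rewrite -IH; mxnorm.
  rewrite hBA mul1mx -![_ *m ctrmx A *m Bs]mulmxA hAsBs !mulmx1.
  by rewrite addrC subrK.
have e4 : A *m SS = SS *m ctrmx A + 'i *: (P - N) by rewrite -IH addrC subrK.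
mxnorm.
rewrite !hAB !mul1mx -![_ *m Bs *m ctrmx A]mulmxA hBsAs !mulmx1.
rewrite e4 e3.
mxnorm.
evring.
Qed.

Lemma SrecR (hadm : admissible A S0 Pi0) k :
  S k.+1 = Ap *m S k *m Aps + 2%:R *: (B *m Y k *m ctrmx (Y k) *m Bs).
Proof.
have IH := Inv hadm k.
rewrite Sstep -(mulmxA B (Y k)).
move: IH; rewrite /S.
set SS := Sseq A S0 Pi0 k; set P := X k *m ctrmx (X k); set N := Y k *m ctrmx (Y k).
move=> IH; rewrite /Ap /Am /Aps /Ams.
have hAB := AB; have hBA := BA; have hAsBs := AsBs; have hBsAs := BsAs.
clearbody SS P N Ap Am Aps Ams X Y B Bs.
have e3 : SS *m Bs = B *m SS + B *m ('i *: (P - N)) *m Bs.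
  rewrite -IH; mxnorm.
  rewrite hBA mul1mx -![_ *m ctrmx A *m Bs]mulmxA hAsBs !mulmx1.
  by rewrite addrC subrK.
mxnorm. rewrite e3. mxnorm. evring.
Qed.

Lemma SrecQ (hadm : admissible A S0 Pi0) k :
  S k.+1 = Am *m S k *m Ams + 2%:R *: (B *m X k *m ctrmx (X k) *m Bs).
Proof.
have IH := Inv hadm k.
rewrite Sstep -(mulmxA B (X k)).
move: IH; rewrite /S.
set SS := Sseq A S0 Pi0 k; set P := X k *m ctrmx (X k); set N := Y k *m ctrmx (Y k).
move=> IH; rewrite /Ap /Am /Aps /Ams.
have hAB := AB; have hBA := BA; have hAsBs := AsBs; have hBsAs := BsAs.
clearbody SS P N Ap Am Aps Ams X Y B Bs.
have e3 : SS *m Bs = B *m SS + B *m ('i *: (P - N)) *m Bs.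
  rewrite -IH; mxnorm.
  rewrite hBA mul1mx -![_ *m ctrmx A *m Bs]mulmxA hAsBs !mulmx1.
  by rewrite addrC subrK.
mxnorm. rewrite e3. mxnorm. evring.
Qed.

End Main.


Section Psd.
Variable C : numClosedFieldType.

Lemma invmx_mul p (M N : 'M[C]_p) : M \in unitmx -> N \in unitmx ->
  invmx (M *m N) = invmx N *m invmx M.
Proof.
move=> uM uN; have uMN : M *m N \in unitmx by rewrite unitmx_mul uM uN.
rewrite -[RHS]mul1mx -(mulVmx uMN) -!mulmxA.
by rewrite (mulKVmx uN) (mulmxV uM) mulmx1.
Qed.

Lemma unitmxX p (M : 'M[C]_p) k : M \in unitmx -> M ^+ k \in unitmx.
Proof.
move=> uM; elim: k => [|k IH]; first by rewrite expr0 unitmx1.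
by rewrite exprS -mulmxE unitmx_mul uM IH.
Qed.

Lemma gram_ge0 p (w : 'cV[C]_p) : 0 <= (ctrmx w *m w) 0 0.
Proof.
rewrite mxE; apply: sumr_ge0 => i _; rewrite ctrmxE mulrC; exact: mul_conjC_ge0.
Qed.

Lemma psd_gram p q (Z : 'M[C]_(p, q)) : psdmx (2%:R *: (Z *m ctrmx Z)).
Proof.
split; first by rewrite ctrmxZ ctrmx_mul ctrmxK conjC_nat.
move=> v; rewrite -scalemxAr -scalemxAl mxE.
apply: mulr_ge0; first by rewrite ler0n.
have -> : ctrmx v *m (Z *m ctrmx Z) *m v = ctrmx (ctrmx Z *m v) *m (ctrmx Z *m v).
  by rewrite ctrmx_mul ctrmxK !mulmxA.
exact: gram_ge0.
Qed.

Lemma pd_ge0 p (M : 'M[C]_p) (v : 'cV[C]_p) : pdmx M -> 0 <= (ctrmx v *m M *m v) 0 0.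
Proof.
case=> _ h; have [->|nz] := eqVneq v 0; last exact: ltW (h v nz).
by rewrite mulmx0 mxE.
Qed.

Lemma pd_add p (M D : 'M[C]_p) : pdmx M -> psdmx D -> pdmx (M + D).
Proof.
case=> hM pM [hD pD]; split; first by rewrite ctrmxD hM hD.
move=> v nz; rewrite mulmxDr mulmxDl mxE.
exact: ltr_wpDr (pD v) (pM v nz).
Qed.

Lemma pd_unit p (M : 'M[C]_p) : pdmx M -> M \in unitmx.
Proof.
case=> hM pM; rewrite unitmxE unitfE; apply/negP => /det0P [w nz hw].
have nzv : ctrmx w != 0.
  by apply: contra nz => /eqP h; rewrite -[w]ctrmxK h ctrmx0.
have := pM _ nzv; rewrite ctrmxK hw mul0mx mxE ltxx //.
Qed.

Lemma pd_inv_psd p (M : 'M[C]_p) : pdmx M -> psdmx (invmx M).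
Proof.
move=> pdM; have uM := pd_unit pdM; case: (pdM) => hM pM.
split; first by rewrite ctrmx_inv hM.
move=> v; set y := invmx M *m v.
have ev : v = M *m y by rewrite /y (mulKVmx uM).
have evs : ctrmx v = ctrmx y *m M by rewrite {1}ev ctrmx_mul hM.
rewrite {1}evs -(mulmxA _ M) (mulmxV uM) mulmx1.
rewrite [in X in ctrmx y *m X]ev mulmxA; exact: pd_ge0.
Qed.

Lemma inv_mono p (M D : 'M[C]_p) (v : 'cV[C]_p) : pdmx M -> psdmx D ->
  (ctrmx v *m invmx (M + D) *m v) 0 0 <= (ctrmx v *m invmx M *m v) 0 0.
Proof.
move=> pdM psdD; have pdM' := pd_add pdM psdD.
have uM := pd_unit pdM; have uM' := pd_unit pdM'.
case: (pdM) => hM _; case: (psdD) => hD pD.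
set x := invmx (M + D) *m v; set y := invmx M *m v.
have ex : (M + D) *m x = v by rewrite /x (mulKVmx uM').
have ey : M *m y = v by rewrite /y (mulKVmx uM).
have eys : ctrmx y *m M = ctrmx v by rewrite -ey ctrmx_mul hM.
have key : ctrmx v *m y - ctrmx v *m x =
    ctrmx (x - y) *m M *m (x - y) + ctrmx x *m D *m x.
  clearbody x y.
  have r1 : ctrmx x *m M *m x = ctrmx x *m v - ctrmx x *m D *m x.
    by rewrite -ex mulmxDl mulmxDr !mulmxA addrK.
  have r2 : ctrmx x *m M *m y = ctrmx x *m v by rewrite -mulmxA ey.
  have r3 : ctrmx y *m M *m x = ctrmx v *m x by rewrite eys.
  have r4 : ctrmx y *m M *m y = ctrmx v *m y by rewrite eys.
  rewrite ctrmxB; mxnorm; rewrite r1 r2 r3 r4.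
  evring.
rewrite -subr_ge0 -!mulmxA -/x -/y.
have -> : (ctrmx v *m y) 0 0 - (ctrmx v *m x) 0 0 = (ctrmx v *m y - ctrmx v *m x) 0 0.
  by rewrite !mxE.
rewrite key mxE; apply: addr_ge0; first exact: pd_ge0.
exact: pD.
Qed.

End Psd.


Section Cvg.
Variable C : numClosedFieldType.

Definition cvgC (u : nat -> C) (l : C) := forall eps : C, 0 < eps ->
  exists N, forall k, (N <= k)%N -> `|u k - l| < eps.

Lemma cvgC_ext u v l : (forall k, u k = v k) -> cvgC u l -> cvgC v l.
Proof. by move=> e h eps e0; have [N hN] := h eps e0; exists N => k hk; rewrite -e hN. Qed.

Lemma cvgC_const c : cvgC (fun _ => c) c.
Proof. by move=> eps e0; exists 0%N => k _; rewrite subrr normr0. Qed.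

Lemma half_gt0 (eps : C) : 0 < eps -> 0 < eps / 2%:R.
Proof. by move=> e0; rewrite divr_gt0 // ltr0n. Qed.

Lemma cvgC_add u v a b : cvgC u a -> cvgC v b -> cvgC (fun k => u k + v k) (a + b).
Proof.
move=> hu hv eps e0; have e2 := half_gt0 e0.
have [N1 h1] := hu _ e2; have [N2 h2] := hv _ e2; exists (maxn N1 N2) => k hk.
have hk1 : (N1 <= k)%N := leq_trans (leq_maxl _ _) hk.
have hk2 : (N2 <= k)%N := leq_trans (leq_maxr _ _) hk.
rewrite (splitr eps) (_ : u k + v k - (a + b) = (u k - a) + (v k - b)); last by ring.
exact: le_lt_trans (ler_normD _ _) (ltrD (h1 k hk1) (h2 k hk2)).
Qed.

Lemma cvgC_scale c u a : cvgC u a -> cvgC (fun k => c * u k) (c * a).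
Proof.
move=> hu eps e0.
have d0 : 0 < `|c| + 1 by have := ler_ltD (normr_ge0 c) (@ltr01 C); rewrite addr0.
have [N h] := hu (eps / (`|c| + 1)) (divr_gt0 e0 d0); exists N => k hk.
rewrite -mulrBr normrM.
apply: (@le_lt_trans _ _ ((`|c| + 1) * `|u k - a|)).
  by apply: ler_wpM2r; rewrite ?normr_ge0 // lerDl ler01.
by rewrite mulrC -ltr_pdivlMr //; exact: h.
Qed.

Lemma cvgC_conj u a : cvgC u a -> cvgC (fun k => (u k)^*) a^*.
Proof. by move=> hu eps e0; have [N h] := hu eps e0; exists N => k hk; rewrite -rmorphB norm_conjC h. Qed.

Lemma cvgC_unique u a b : cvgC u a -> cvgC u b -> a = b.
Proof.
move=> ha hb; apply/eqP; rewrite -subr_eq0; apply/negP => /negP nz.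
have d0 : 0 < `|a - b| by rewrite normr_gt0.
have e2 := half_gt0 d0.
have [N1 h1] := ha _ e2; have [N2 h2] := hb _ e2.
have hk1 : (N1 <= maxn N1 N2)%N := leq_maxl _ _.
have hk2 : (N2 <= maxn N1 N2)%N := leq_maxr _ _.
have := ltrD (h1 _ hk1) (h2 _ hk2); rewrite -splitr.
rewrite (_ : a - b = (u (maxn N1 N2) - b) - (u (maxn N1 N2) - a)); last by ring.
rewrite addrC => h.
have := le_lt_trans (ler_normB _ _) h; rewrite ltxx.
by [].
Qed.

Lemma cvgC_sum (I : Type) (s : seq I) (F : I -> nat -> C) (L : I -> C) :
  (forall i, cvgC (F i) (L i)) ->
  cvgC (fun k => \sum_(i <- s) F i k) (\sum_(i <- s) L i).
Proof.
move=> h; elim: s => [|i s IH].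
  by apply: cvgC_ext (cvgC_const _) => k; rewrite !big_nil.
rewrite big_cons; apply: cvgC_ext (cvgC_add (h i) IH) => k.
by rewrite big_cons.
Qed.

Lemma mono_le (u : nat -> C) : (forall k, u k.+1 <= u k) ->
  forall N k, (N <= k)%N -> u k <= u N.
Proof.
move=> hm N k /subnK <-; elim: (k - N)%N => [|d IH]; first by rewrite add0n.
by rewrite addSn; apply: le_trans (hm _) IH.
Qed.

Lemma cvgC_mono (hC : real_complete C) (u : nat -> C) :
  (forall k, 0 <= u k) -> (forall k, u k.+1 <= u k) ->
  exists l, cvgC u l /\ 0 <= l.
Proof.
move=> h0 hm.
pose E := fun x : C => exists k, x = - u k.
have Er : forall x, E x -> x \is Num.real.
  by move=> x [k ->]; rewrite rpredN; apply: ger0_real.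
have [s [sr [sub sl]]] : exists s, s \is Num.real /\ (forall x, E x -> x <= s) /\
    (forall M, M \is Num.real -> (forall x, E x -> x <= M) -> s <= M).
  apply: hC => //; first by exists (- u 0%N), 0%N.
  exists 0; split; first exact: real0.
  by move=> x [k ->]; rewrite oppr_le0.
have s0 : s <= 0 by apply: sl; [exact: real0 | move=> x [k ->]; rewrite oppr_le0].
exists (- s); split; last by rewrite oppr_ge0.
move=> eps e0.
have [N hN] : exists N, s - eps < - u N.
  case: (classic (exists N, s - eps < - u N)) => // hne; exfalso.
  have : s <= s - eps.
    apply: sl; first by rewrite rpredB // gtr0_real.
    move=> x [k ->]; have r1 : - u k \is Num.real by apply: Er; exists k.
    have r2 : s - eps \is Num.real by rewrite rpredB // gtr0_real.
    rewrite real_leNgt //.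
    by apply/negP => hk; apply: hne; exists k.
  move=> h; have h2 : s - eps < s by rewrite gtrBl.
  by have := lt_le_trans h2 h; rewrite ltxx.
exists N => k hk.
have hk1 : - u N <= - u k by rewrite lerN2; exact: mono_le hk.
have hk2 : - u k <= s by apply: sub; exists k.
rewrite opprK ger0_norm; last by rewrite addrC -(opprK (u k)) subr_ge0.
have := lt_le_trans hN hk1.
rewrite ltrBlDr => h; rewrite -(ltrD2l (- u k)) addrA addNr add0r.
by [].
Qed.

Lemma unif (T : finType) (P : T -> nat -> Prop) :
  (forall t N N', (N <= N')%N -> P t N -> P t N') ->
  (forall t, exists N, P t N) -> exists N, forall t, P t N.
Proof.
move=> hmon hex.
suff [N hN] : exists N, forall t, t \in enum T -> P t N.
  by exists N => t; apply: hN; rewrite mem_enum.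
elim: (enum T) => [|t s [N hN]]; first by exists 0%N.
have [N1 h1] := hex t; exists (maxn N1 N) => t'; rewrite inE => /orP [/eqP -> | ht].
  exact: hmon (leq_maxl _ _) h1.
exact: hmon (leq_maxr _ _) (hN _ ht).
Qed.

End Cvg.


Section Lim.
Variable C : numClosedFieldType.

Definition quad p (v : 'cV[C]_p) (N : 'M[C]_p) := (ctrmx v *m N *m v) 0 0.

Lemma cvgC_sub (u v : nat -> C) a b : cvgC u a -> cvgC v b -> cvgC (fun k => u k - v k) (a - b).
Proof.
move=> hu hv; have := cvgC_add hu (cvgC_scale (-1) hv); rewrite mulN1r.
by apply: cvgC_ext => k; rewrite mulN1r.
Qed.

Lemma ctrmx_delta p (r : 'I_p) : ctrmx (delta_mx r 0 : 'cV[C]_p) = delta_mx 0 r.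
Proof.
apply/matrixP=> i j; rewrite ctrmxE !mxE.
by case: (j == r); case: (i == 0); rewrite /= ?conjC1 ?conjC0.
Qed.

Lemma ev_delta p (N : 'M[C]_p) (r c : 'I_p) :
  ev 0 0 ((delta_mx 0 r : 'rV[C]_p) *m N *m (delta_mx c 0 : 'cV[C]_p)) = N r c.
Proof. by rewrite /ev -rowE -colE !mxE. Qed.

Lemma polar p (N : 'M[C]_p) (r c : 'I_p) :
  let e := fun i : 'I_p => (delta_mx i 0 : 'cV[C]_p) in
  N r c = 2%:R^-1 * ((quad (e r + e c) N - quad (e r) N - quad (e c) N)
            - 'i * (quad (e r + 'i *: e c) N - quad (e r) N - quad (e c) N)).
Proof.
move=> e.
have h2 : (2%:R : C) != 0 by rewrite pnatr_eq0.
apply: (mulfI h2); rewrite mulrA mulfV // mul1r.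
rewrite /quad /e !ctrmxD ctrmxZ !ctrmx_delta conjCi.
rewrite -!/(ev 0 0 _).
mxnorm.
repeat progress rewrite ?evD ?evB ?evN ?evZ ?ev0.
rewrite !ev_delta.
repeat progress rewrite ?mulrDr ?mulrBr ?mulrN ?mulNr ?mulrA ?mulCii.
ring.
Qed.

Lemma quad_sum p (v : 'cV[C]_p) (N : 'M[C]_p) :
  quad v N = \sum_(j < p) v j 0 * \sum_(i < p) (ctrmx v 0 i * N i j).
Proof.
rewrite /quad mxE; apply: eq_bigr => j _; rewrite mxE mulrC; congr (_ * _).
Qed.

Lemma psd_limit (hC : real_complete C) p (M : nat -> 'M[C]_p) :
  (forall k, psdmx (M k)) -> (forall k v, quad v (M k.+1) <= quad v (M k)) ->
  exists L, mx_cvg M L /\ psdmx L.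
Proof.
move=> hpsd hmon.
have hl : forall v : 'cV[C]_p, exists l, cvgC (fun k => quad v (M k)) l /\ 0 <= l.
  move=> v; apply: cvgC_mono => // k; by case: (hpsd k) => _ h; apply: h.
pose lim v := proj1_sig (constructive_indefinite_description _ (hl v)).
have hlim : forall v, cvgC (fun k => quad v (M k)) (lim v) /\ 0 <= lim v.
  by move=> v; rewrite /lim; case: (constructive_indefinite_description _ _).
pose e := fun i : 'I_p => (delta_mx i 0 : 'cV[C]_p).
pose L := \matrix_(r, c) (2%:R^-1 * ((lim (e r + e c) - lim (e r) - lim (e c))
            - 'i * (lim (e r + 'i *: e c) - lim (e r) - lim (e c)))).
have hent : forall r c, cvgC (fun k => M k r c) (L r c).
  move=> r c; rewrite mxE.
  have := cvgC_scale (2%:R^-1) (cvgC_sub (cvgC_sub (cvgC_sub (hlim (e r + e c)).1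
     (hlim (e r)).1) (hlim (e c)).1) (cvgC_scale 'i (cvgC_sub (cvgC_sub
     (hlim (e r + 'i *: e c)).1 (hlim (e r)).1) (hlim (e c)).1))).
  by apply: cvgC_ext => k; rewrite -polar.
exists L; split.
  move=> eps e0.
  have [N hN] : exists N, forall rc : 'I_p * 'I_p, forall k, (N <= k)%N -> `|M k rc.1 rc.2 - L rc.1 rc.2| < eps.
    apply: unif; first by move=> t N N' hNN' h k hk; apply: h; exact: leq_trans hNN' hk.
    by move=> rc; apply: hent.
  by exists N => k hk i j; exact: (hN (i, j) k hk).
split.
  apply/matrixP=> r c; rewrite ctrmxE.
  apply: (cvgC_unique (cvgC_conj (hent c r))).
  apply: cvgC_ext (hent r c) => k.
  by case: (hpsd k) => h _; rewrite -ctrmxE h.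
move=> v.
have hq : cvgC (fun k => quad v (M k)) (quad v L).
  rewrite quad_sum; apply: cvgC_ext; first by move=> k; rewrite quad_sum.
  apply: cvgC_sum => j; apply: cvgC_scale; apply: cvgC_sum => i.
  exact: cvgC_scale.
have -> : (ctrmx v *m L *m v) 0 0 = quad v L by [].
by rewrite (cvgC_unique hq (hlim v).1); exact: (hlim v).2.
Qed.

End Lim.


Lemma step_gen (C : numClosedFieldType) p (P Ps S S' T : 'M[C]_p) k :
  P \in unitmx -> Ps \in unitmx -> S' = P *m S *m Ps + T ->
  invmx (P ^+ k.+1) *m S' *m invmx (Ps ^+ k.+1) - invmx (P ^+ k) *m S *m invmx (Ps ^+ k)
  = invmx (P ^+ k.+1) *m T *m invmx (Ps ^+ k.+1).
Proof.
move=> uP uPs ->; rewrite mulmxDr mulmxDl.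
suff -> : invmx (P ^+ k.+1) *m (P *m S *m Ps) *m invmx (Ps ^+ k.+1) =
  invmx (P ^+ k) *m S *m invmx (Ps ^+ k) by rewrite addrAC subrr add0r.
rewrite exprS exprSr -!mulmxE invmx_mul ?unitmxX // invmx_mul ?unitmxX //.
rewrite !mulmxA -(mulmxA (invmx (P ^+ k)) (invmx P) P) (mulVmx uP) mulmx1.
by rewrite -(mulmxA _ Ps (invmx Ps)) (mulmxV uPs) mulmx1.
Qed.

Unset Implicit Arguments. Set Strict Implicit.

Theorem mainTheorem3 (C : numClosedFieldType) (hC : real_complete C)
  (n m1 m2 : nat) (hm1 : (0 < m1)%N) (hm2 : (0 < m2)%N)
  (A S0 : 'M[C]_n) (Pi0 : 'M[C]_(n, m1 + m2))
  (hadm : admissible A S0 Pi0)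
  (hi : ~~ eigenvalue A 'i) (hmi : ~~ eigenvalue A (- 'i)) :
  let th1 := lsubmx Pi0 in
  let th2 := rsubmx Pi0 in
  let Ap := 1%:M + 'i *: invmx A in
  let Am := 1%:M - 'i *: invmx A in
  let R := fun k : nat => invmx (Ap ^+ k) *m Sseq A S0 Pi0 k
                          *m invmx ((1%:M - 'i *: invmx (ctrmx A)) ^+ k) in
  let Q := fun k : nat => invmx (Am ^+ k) *m Sseq A S0 Pi0 k
                          *m invmx ((1%:M + 'i *: invmx (ctrmx A)) ^+ k) in
  (forall k : nat,
     Piseq A Pi0 k = row_mx (Ap ^+ k *m th1) (Am ^+ k *m th2)
     /\ R k.+1 - R k =
          2%:R *: (invmx (Ap ^+ k.+1) *m invmx A *m Am ^+ k *m th2 *m ctrmx th2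
                   *m ctrmx (Am ^+ k) *m ctrmx (invmx A) *m ctrmx (invmx (Ap ^+ k.+1)))
     /\ psdmx (R k.+1 - R k)
     /\ psdmx (Q k.+1 - Q k))
  /\ (exists kR : 'M[C]_n, mx_cvg (fun k => invmx (R k)) kR /\ psdmx kR)
  /\ (exists kQ : 'M[C]_n, mx_cvg (fun k => invmx (Q k)) kQ /\ psdmx kQ).
Proof.
move=> th1 th2 Ap Am R Q.
have uA : A \in unitmx by case: hadm => h _; rewrite unitmxE unitfE.
set Aps := 1%:M - 'i *: invmx (ctrmx A).
set Ams := 1%:M + 'i *: invmx (ctrmx A).
have cAp : ctrmx Ap = Aps by apply: ctrAp.
have cAm : ctrmx Am = Ams by apply: ctrAm.
have uAp : Ap \in unitmx.
  rewrite unitmxE unitfE; apply: contra hmi => /det0P [w nz hw].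
  apply/eigenvalueP; exists w => //.
  have := congr1 (mulmx^~ A) hw; rewrite mul0mx /Ap.
  rewrite mulmxDr mulmx1 -scalemxAr mulmxDl -scalemxAl -mulmxA mulVmx // mulmx1.
  by move=> h; apply/eqP; rewrite scaleNr -addr_eq0 h.
have uAm : Am \in unitmx.
  rewrite unitmxE unitfE; apply: contra hi => /det0P [w nz hw].
  apply/eigenvalueP; exists w => //.
  have := congr1 (mulmx^~ A) hw; rewrite mul0mx /Am.
  rewrite mulmxBr mulmx1 -scalemxAr mulmxBl -scalemxAl -mulmxA mulVmx // mulmx1.
  by move=> h; apply/eqP; rewrite -subr_eq0 h.
have uAps : Aps \in unitmx by rewrite -cAp ctrmx_unit.
have uAms : Ams \in unitmx by rewrite -cAm ctrmx_unit.
have dR : forall k, R k.+1 - R k = invmx (Ap ^+ k.+1) *m (2%:R *: (invmx A *m (Am ^+ k *m th2)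
    *m ctrmx (Am ^+ k *m th2) *m invmx (ctrmx A))) *m invmx (Aps ^+ k.+1).
  by move=> k; rewrite /R; apply: step_gen => //; exact: (SrecR uA hadm k).
have dQ : forall k, Q k.+1 - Q k = invmx (Am ^+ k.+1) *m (2%:R *: (invmx A *m (Ap ^+ k *m th1)
    *m ctrmx (Ap ^+ k *m th1) *m invmx (ctrmx A))) *m invmx (Ams ^+ k.+1).
  by move=> k; rewrite /Q; apply: step_gen => //; exact: (SrecQ uA hadm k).
have fR : forall k, R k.+1 - R k =
          2%:R *: (invmx (Ap ^+ k.+1) *m invmx A *m Am ^+ k *m th2 *m ctrmx th2
                   *m ctrmx (Am ^+ k) *m ctrmx (invmx A) *m ctrmx (invmx (Ap ^+ k.+1))).
  move=> k; rewrite dR -scalemxAr -scalemxAl; congr (_ *: _).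
  by rewrite !ctrmx_mul !ctrmx_inv !ctrmxX cAp !mulmxA.
have psdR : forall k, psdmx (R k.+1 - R k).
  move=> k; rewrite fR.
  have -> : invmx (Ap ^+ k.+1) *m invmx A *m Am ^+ k *m th2 *m ctrmx th2
      *m ctrmx (Am ^+ k) *m ctrmx (invmx A) *m ctrmx (invmx (Ap ^+ k.+1)) =
      (invmx (Ap ^+ k.+1) *m invmx A *m Am ^+ k *m th2) *m
      ctrmx (invmx (Ap ^+ k.+1) *m invmx A *m Am ^+ k *m th2).
    by rewrite [in RHS]ctrmx_mul [ctrmx (_ *m Am ^+ k)]ctrmx_mul
               [ctrmx (_ *m invmx A)]ctrmx_mul !mulmxA.
  exact: psd_gram.
have psdQ : forall k, psdmx (Q k.+1 - Q k).
  move=> k; rewrite dQ -scalemxAr -scalemxAl.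
  have -> : invmx (Am ^+ k.+1) *m (invmx A *m (Ap ^+ k *m th1) *m ctrmx (Ap ^+ k *m th1)
      *m invmx (ctrmx A)) *m invmx (Ams ^+ k.+1) =
      (invmx (Am ^+ k.+1) *m invmx A *m (Ap ^+ k *m th1)) *m
      ctrmx (invmx (Am ^+ k.+1) *m invmx A *m (Ap ^+ k *m th1)).
    by rewrite !ctrmx_mul !ctrmx_inv !ctrmxX cAm !mulmxA.
  exact: psd_gram.
have pdR : forall k, pdmx (R k).
  elim=> [|k IH]; first by rewrite /R !expr0 !invmx1 mul1mx mulmx1; case: hadm => _ [].
  have -> : R k.+1 = R k + (R k.+1 - R k) by rewrite addrC subrK.
  exact: pd_add.
have pdQ : forall k, pdmx (Q k).
  elim=> [|k IH]; first by rewrite /Q !expr0 !invmx1 mul1mx mulmx1; case: hadm => _ [].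
  have -> : Q k.+1 = Q k + (Q k.+1 - Q k) by rewrite addrC subrK.
  exact: pd_add.
split.
  move=> k; split; first exact: Pi_form.
  by split; [exact: fR | split].
split.
  apply: psd_limit => //; first by move=> k; apply: pd_inv_psd.
  move=> k v; have -> : R k.+1 = R k + (R k.+1 - R k) by rewrite addrC subrK.
  exact: inv_mono.
apply: psd_limit => //; first by move=> k; apply: pd_inv_psd.
move=> k v; have -> : Q k.+1 = Q k + (Q k.+1 - Q k) by rewrite addrC subrK.
exact: inv_mono.
Qed.
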